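(* Let $1\le k\le n$ and $N=k(n-k)$. In the field of rational functions $\mathbb Q(x_1,\dots,x_n,m_1,\dots,m_N)$ the following identity holds: $$\sum_{J\subset\{1,\dots,n\},\ |J|=k}\ \frac{\prod_{r=1}^{N}(x_J-m_r)}{\prod_{i\in J}\prod_{j\notin J}(x_i-x_j)} \;=\; N!\cdot\prod_{i=1}^k\frac{(i-1)!}{(n-i)!},$$ where $x_J=\sum_{i\in J}x_i$.
   Context: $x_1,\dots,x_n,m_1,\dots,m_N$ are independent indeterminates. *)

(* Defs.v *)
From HB Require Import structures.
From mathcomp Require Import all_boot all_order all_algebra.
Set Implicit Arguments. Unset Strict Implicit. Unset Printing Implicit Defensive.

(* Main.v *)
Require Import Defs.
From HB Require Import structures.
From mathcomp Require Import all_boot all_order all_algebra.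
From mathcomp Require Import mpoly zify.
Import Order.TTheory GRing.Theory Num.Theory.

Lemma sum_up n : forall s : seq nat, uniq s -> all (fun i => i < n) s ->
  sumn s <= \sum_(a < size s) (n - size s + a).
Proof.
elim: n => [|n IH] s hu ha.
  by case: s ha hu => //= ? ?.
case: (boolP (n \in s)) => ns.
  have hp := perm_to_rem ns.
  have hu' : uniq (rem n s) by apply: rem_uniq.
  have ha' : all (fun i => i < n) (rem n s).
    apply/allP => i; rewrite (mem_rem_uniq _ hu) !inE => /andP [ina ins].
    by move/allP: ha => /(_ _ ins); rewrite ltnS leq_eqVlt (negPf ina).
  have h := IH _ hu' ha'.
  have sz : size s = (size (rem n s)).+1.
    by rewrite size_rem // prednK //; case: (s) ns.
  rewrite (perm_sumn hp) /= sz big_ord_recr /= addnC leq_add //.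
  lia.
have ha' : all (fun i => i < n) s.
  apply/allP => i ins; move/allP: ha => /(_ _ ins); rewrite ltnS leq_eqVlt.
  by case/orP => // /eqP e; move: ns; rewrite -e ins.
apply: leq_trans (IH _ hu ha') _; apply: leq_sum => a _. lia.
Qed.

Lemma sum_low n : forall s : seq nat, uniq s -> all (fun i => i < n) s ->
  \sum_(a < size s) a <= sumn s.
Proof.
elim: n => [|n IH] s hu ha.
  by case: s ha hu => [|? ?] //=; rewrite big_ord0.
case: (boolP (n \in s)) => ns.
  have hp := perm_to_rem ns.
  have hu' : uniq (rem n s) by apply: rem_uniq.
  have ha' : all (fun i => i < n) (rem n s).
    apply/allP => i; rewrite (mem_rem_uniq _ hu) !inE => /andP [ina ins].
    by move/allP: ha => /(_ _ ins); rewrite ltnS leq_eqVlt (negPf ina).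
  have szs : size s <= n.+1.
    rewrite -(size_iota 0 n.+1); apply: uniq_leq_size => // i ins.
    by rewrite mem_iota /=; move/allP: ha => /(_ _ ins).
  have h := IH _ hu' ha'.
  have sz : size s = (size (rem n s)).+1.
    by rewrite size_rem // prednK //; case: (s) ns.
  rewrite (perm_sumn hp) /= sz big_ord_recr /= addnC leq_add //.
  by rewrite -ltnS -sz.
have ha' : all (fun i => i < n) s.
  apply/allP => i ins; move/allP: ha => /(_ _ ins); rewrite ltnS leq_eqVlt.
  by case/orP => // /eqP e; move: ns; rewrite -e ins.
exact: IH.
Qed.
Lemma big_top (R : Type) (idx : R) (op : Monoid.com_law idx) n k (hk : k <= n)
  (f : nat -> R) :
  \big[op/idx]_(i in [set i : 'I_n | n - k <= i]) f i = \big[op/idx]_(a < k) f (n - k + a).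
Proof.
rewrite (eq_bigl (fun i : 'I_n => n - k <= i)); last by move=> i; rewrite inE.
rewrite -(big_mkord (fun i => n - k <= i) f) (big_cat_nat (n := n - k)) ?leq_subr //=.
rewrite big_nat_cond big_pred0; last by move=> i; case: (ltnP i (n - k)); rewrite ?andbF ?andbT.
rewrite Monoid.mul1m big_nat_cond (eq_bigl (fun i => n - k <= i < n)); last first.
  by move=> i; case/boolP: (n - k <= i < n) => //= /andP [->].
rewrite -big_nat -[X in \big[_/_]_(X <= _ < _) _](add0n (n - k)) big_addn subKn // big_mkord.
by apply: eq_bigr => a _; rewrite addnC.
Qed.

Lemma big_bot (R : Type) (idx : R) (op : Monoid.com_law idx) n k (hk : k <= n)
  (f : nat -> R) :
  \big[op/idx]_(i in ~: [set i : 'I_n | n - k <= i]) f i = \big[op/idx]_(j < n - k) f j.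
Proof.
rewrite (eq_bigl (fun i : 'I_n => i < n - k)); last by move=> i; rewrite !inE ltnNge.
rewrite -(big_mkord (fun i => i < n - k) f) (big_cat_nat (n := n - k)) ?leq_subr //=.
rewrite [X in op _ X]big_nat_cond [X in op _ X]big_pred0; last by move=> i; case: (ltnP i (n - k)); rewrite ?andbF ?andbT //= => -> /=; rewrite andbF.
rewrite Monoid.mulm1 big_nat_cond (eq_bigl (fun i => 0 <= i < n - k)); last first.
  by move=> i; case/boolP: (0 <= i < n - k) => //= /andP [_ ->].
by rewrite -big_nat big_mkord.
Qed.

Lemma sJ_bounds n k (J : {set 'I_n}) (hJ : #|J| = k) :
  \sum_(a < k) a <= \sum_(i in J) (i : nat) /\
  \sum_(i in J) (i : nat) <= \sum_(a < k) (n - k + a).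
Proof.
pose s := [seq val i | i <- enum J].
have hu : uniq s by rewrite map_inj_uniq ?enum_uniq //; exact: val_inj.
have ha : all (fun i => i < n) s by apply/allP => _ /mapP [i _ ->]; exact: ltn_ord.
have hsz : size s = k by rewrite size_map -cardE.
have hsum : sumn s = \sum_(i in J) (i : nat) by rewrite sumnE big_map big_enum.
rewrite -hsum; move: hsz; case: _ /; split; [exact: (@sum_low n s hu ha) | exact: sum_up].
Qed.

Lemma top_unique n k (hk : k <= n) (J : {set 'I_n}) (hJ : #|J| = k) :
  \sum_(i in J) (i : nat) = \sum_(a < k) (n - k + a) ->
  J = [set i : 'I_n | n - k <= i].
Proof.
move=> hs; set T := [set i : 'I_n | n - k <= i].
have hT : #|T| = k.
  by rewrite -sum1_card (@big_top _ _ _ n k hk (fun _ => 1)) sum_nat_const card_ord muln1.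
apply/eqP; rewrite eqEcard hJ hT leqnn andbT.
apply/subsetP => j jJ; rewrite inE leqNgt; apply/negP => jlt.
have [i iT iJ] : exists2 i, i \in T & i \notin J.
  case: (boolP (T \subset J)) => [sub|/subsetPn //].
  have : J \subset T.
    by move: sub; rewrite subEproper => /orP [/eqP <- //|/proper_card]; rewrite hJ hT ltnn.
  by move/subsetP/(_ _ jJ); rewrite inE leqNgt jlt.
pose J' := i |: (J :\ j).
have hJ' : #|J'| = k.
  by rewrite cardsU1 !inE negb_and iJ orbT /= -hJ (cardsD1 j J) jJ.
have := (@sJ_bounds n k J' hJ').2; rewrite -hs.
rewrite big_setU1 /=; last by rewrite !inE negb_and iJ orbT.
rewrite (big_setD1 j jJ) /= leq_add2r leqNgt.
by move: iT; rewrite inE => /(leq_trans jlt) ->.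
Qed.
Lemma fact_shift m a : (\prod_(j < m) (m + a - j)) * a`! = (m + a)`!.
Proof.
elim: m => [|m IH]; first by rewrite big_ord0 mul1n.
rewrite big_ord_recl /= subn0 -mulnA.
have -> : \prod_(i < m) (m.+1 + a - bump 0 i) = \prod_(i < m) (m + a - i).
  by apply: eq_bigr => i _; rewrite /bump /= add1n addSn subSS.
by rewrite IH addSn factS.
Qed.

Lemma Dn_id n k (hkn : k <= n) :
  (\prod_(a < k) \prod_(j < n - k) (n - k + a - j)) * \prod_(a < k) a`!
  = \prod_(i < k) (n - i.+1)`!.
Proof.
rewrite -big_split /=.
under eq_bigr do rewrite fact_shift.
rewrite (reindex_inj rev_ord_inj) /=; apply: eq_bigr => i _.
by congr (_ `!); have := ltn_ord i; lia.
Qed.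

Local Open Scope ring_scope.

Lemma size_sum_le (R : nzRingType) (I : Type) (r : seq I) (P : pred I)
  (G : I -> {poly R}) (b : nat) :
  (forall i, P i -> leq (size (G i)) b) -> leq (size (\sum_(i <- r | P i) G i)) b.
Proof.
move=> H; elim/big_rec: _ => [|i p Pi hp]; first by rewrite size_poly0.
by apply: leq_trans (size_polyD _ _) _; rewrite geq_max H.
Qed.

Lemma count_neq n (i : 'I_n) : count (fun j => j != i) (index_enum 'I_n) = n.-1.
Proof.
rewrite -[n in RHS]card_ord -(cardC1 i) cardE /enum_mem size_filter.
by apply: eq_count => j /=; rewrite !inE.
Qed.

Lemma interp (F : fieldType) n (x : 'I_n -> F) (hx : injective x) d
  (hd : (d <= n.-1)%N) (hn : (0 < n)%N) :
  \sum_i x i ^+ d / \prod_(j | j != i) (x i - x j) = (d == n.-1)%:R.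
Proof.
pose w i := \prod_(j | j != i) (x i - x j).
have wn0 i : w i != 0.
  rewrite prodf_seq_neq0; apply/allP => j _; apply/implyP => ji.
  by rewrite subr_eq0; apply: contra ji => /eqP/hx ->.
pose pi i := \prod_(j | j != i) ('X - (x j)%:P).
have szpi i : size (pi i) = n.
  by rewrite /pi -big_filter size_prod_XsubC size_filter count_neq prednK.
have mpi i : pi i \is monic by rewrite monic_prod_XsubC.
pose q := \sum_i (x i ^+ d / w i) *: pi i.
have szq : leq (size q) n.
  apply: size_sum_le => i _; apply: leq_trans (size_scale_leq _ _) _.
  by rewrite szpi.
have qx l : q.[x l] = x l ^+ d.
  rewrite horner_sum (bigD1 l) //= big1 ?addr0.
    rewrite hornerZ /pi horner_prod.
    under eq_bigr do rewrite hornerXsubC.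
    by rewrite -/(w l) divfK.
  move=> i il; rewrite hornerZ /pi horner_prod (bigD1 l) 1?eq_sym //=.
  by rewrite hornerXsubC subrr mul0r mulr0.
have qE : q = 'X^d.
  apply/eqP; rewrite -subr_eq0; apply/negPn/negP => nz.
  have := max_poly_roots nz (rs := map x (enum 'I_n)).
  rewrite size_map size_enum_ord.
  have -> : all (root (q - 'X^d)) (map x (enum 'I_n)).
    by apply/allP => _ /mapP [y _ ->]; rewrite rootE hornerD hornerN qx hornerXn subrr.
  rewrite map_inj_uniq ?enum_uniq // => /(_ isT isT).
  apply/negP; rewrite -leqNgt.
  apply: leq_trans (size_polyD _ _) _; rewrite geq_max szq size_polyN size_polyXn.
  by rewrite -(prednK hn) ltnS.
have := congr1 (fun p : {poly F} => p`_n.-1) qE; rewrite /= coefXn coef_sum eq_sym => <-.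
apply: eq_bigr => i _; rewrite coefZ.
have := mpi i; rewrite monicE => /eqP; rewrite lead_coefE szpi => ->.
by rewrite mulr1.
Qed.

Definition wt {F : fieldType} {n} (x : 'I_n -> F) i := \prod_(j | j != i) (x i - x j).
Definition Lf {F : fieldType} {n} (x : 'I_n -> F) d := \sum_i x i ^+ d / wt x i.
Lemma prodL (F : fieldType) n k (x : 'I_n -> F) (hx : injective x) (hn : (0 < n)%N)
  (mm : 'X_{1..k}) : (mdeg mm <= k * n.-1)%N ->
  \prod_a Lf x (mm a) = (mm == [multinom n.-1 | _ < k])%:R.
Proof.
move=> hdeg.
have L1 : Lf x n.-1 = 1 by rewrite /Lf /wt interp // eqxx.
have L0 d : (d < n.-1)%N -> Lf x d = 0.
  by move=> hd; rewrite /Lf /wt interp ?(ltnW hd) // (ltn_eqF hd).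
case: eqP => [->|ne].
  by rewrite big1 // => a _; rewrite mnmE L1.
case: (boolP [exists a, mm a < n.-1]%N) => [/existsP [a ha]|].
  by rewrite (bigD1 a) //= L0 // mul0r.
rewrite negb_exists => /forallP hall.
have [a ha] : exists a, (n.-1 < mm a)%N.
  case: (boolP [exists a, n.-1 < mm a]%N) => [/existsP//|/existsPn hle].
  exfalso; apply: ne; apply/mnmP => a; rewrite mnmE; apply/eqP; rewrite eqn_leq.
  by rewrite leqNgt hle /= leqNgt hall.
exfalso; move: hdeg; apply/negP; rewrite -ltnNge mdegE.
rewrite (bigD1 a) //= -[k in (k * _)%N]card_ord (cardD1 a) inE /= mulSn.
rewrite -addSn leq_add // -sum1_card big_distrl /=.
rewrite (eq_bigl (fun i => i != a)) => [|i]; last by rewrite !inE andbT.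
by apply: leq_sum => b _; rewrite mul1n leqNgt hall.
Qed.
Lemma tupsum (F : fieldType) n k (x : 'I_n -> F) (hx : injective x) (hn : (0 < n)%N)
  (G : {mpoly F[k]}) (hG : forall mm, (k * n.-1 < mdeg mm)%N -> G@_mm = 0) :
  \sum_(t : {ffun 'I_k -> 'I_n}) G.@[fun a => x (t a)] / \prod_a wt x (t a)
  = G@_[multinom n.-1 | _ < k].
Proof.
under eq_bigr do rewrite mevalE mulr_suml.
rewrite exchange_big /=.
have -> : G@_[multinom n.-1 | _ < k] =
   \sum_(mm <- msupp G) G@_mm * (mm == [multinom n.-1 | _ < k])%:R.
  rewrite {1}(mpolyE G) raddf_sum /=; apply: eq_bigr => mm _.
  by rewrite mcoeffZ mcoeffX.
rewrite !big_seq; apply: eq_bigr => mm hmm.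
have hd : (mdeg mm <= k * n.-1)%N.
  rewrite leqNgt; apply/negP => /hG; move: hmm; rewrite mcoeff_msupp => /eqP + h.
  by apply.
rewrite -(@prodL F n k x hx hn mm hd).
rewrite /Lf bigA_distr_bigA mulr_sumr; apply: eq_bigr => t _.
by rewrite -mulrA -prodf_div.
Qed.

Lemma size_ie N : size (index_enum 'I_N) = N.
Proof. by rewrite /index_enum unlock -enumT size_enum_ord. Qed.

Lemma prod_homog (R : comRingType) k (I : Type) (r : seq I) (P : pred I)
  (Fp : I -> {mpoly R[k]}) (d : I -> nat) :
  (forall i, P i -> Fp i \is (d i).-homog) ->
  \prod_(i <- r | P i) Fp i \is (\sum_(i <- r | P i) d i)%N.-homog.
Proof.
move=> H; elim: r => [|i r ih]; first by rewrite !big_nil dhomog1.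
rewrite !big_cons; case: ifP => // Pi; exact: dhomogM (H _ Pi) ih.
Qed.

Definition sX (R : comRingType) k : {mpoly R[k]} := \sum_(a < k) 'X_a.
Definition VX (R : comRingType) k : {mpoly R[k]} :=
  \prod_(a < k) \prod_(b < k | b != a) ('X_a - 'X_b).

Lemma sX_homog (R : comRingType) k : sX R k \is 1.-homog.
Proof. by apply: rpred_sum => a _; rewrite dhomogX; apply/eqP; apply: mdeg1. Qed.

Lemma VX_homog (R : comRingType) k : VX R k \is (k * k.-1)%N.-homog.
Proof.
have -> : (k * k.-1)%N = (\sum_(a < k) \sum_(b < k | b != a) 1)%N.
  rewrite -[X in (X * _)%N]card_ord -sum_nat_const; apply: eq_bigr => a _.
  by rewrite sum1_card cardC1 card_ord.
apply: prod_homog => a _; apply: prod_homog => b _.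
by apply: rpredB; rewrite dhomogX; apply/eqP; apply: mdeg1.
Qed.

Lemma GX_coef (R : comRingType) k N (c : 'I_N -> R) (mm : 'X_{1..k}) :
  ((\prod_(r < N) (sX R k - (c r)%:MP)) * VX R k)@_mm
  = \sum_(i < N.+1) (\prod_(r < N) ('X - (c r)%:P))`_i * (sX R k ^+ i * VX R k)@_mm.
Proof.
set P := \prod_(r < N) ('X - (c r)%:P).
have -> : \prod_(r < N) (sX R k - (c r)%:MP) = (map_poly (@mpolyC k R) P).[sX R k].
  rewrite /P rmorph_prod horner_prod; apply: eq_bigr => r _.
  by rewrite /= map_polyXsubC hornerXsubC.
have szP : size P = N.+1 by rewrite /P -big_filter size_prod_XsubC size_filter count_predT size_ie.
have inj : injective (@mpolyC k R).
  by move=> a b /eqP; rewrite mpolyC_eq => /eqP.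
rewrite (@horner_coef_wide _ N.+1); last first.
  by rewrite (size_map_inj_poly inj) ?raddf0 ?szP.
rewrite mulr_suml raddf_sum /=; apply: eq_bigr => i _.
by rewrite coef_map /= -mulrA mcoeffCM.
Qed.
Lemma sXV_homog (R : comRingType) k i : sX R k ^+ i * VX R k \is (i + k * k.-1)%N.-homog.
Proof.
have := dhomogMn i (sX_homog R k); rewrite mul1n => h.
exact: dhomogM h (VX_homog R k).
Qed.

Lemma GX_high (R : comRingType) k N (c : 'I_N -> R) (mm : 'X_{1..k}) :
  (N + k * k.-1 < mdeg mm)%N ->
  ((\prod_(r < N) (sX R k - (c r)%:MP)) * VX R k)@_mm = 0.
Proof.
move=> h; rewrite GX_coef big1 // => i _.
rewrite (dhomog_nemf_coeff (sXV_homog R k i)) ?mulr0 //.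
rewrite neq_ltn; apply/orP; right; apply: leq_ltn_trans h; by rewrite leq_add2r -ltnS.
Qed.

Lemma GX_top (R : comRingType) k N (c : 'I_N -> R) (mm : 'X_{1..k}) :
  mdeg mm = (N + k * k.-1)%N ->
  ((\prod_(r < N) (sX R k - (c r)%:MP)) * VX R k)@_mm
  = (sX R k ^+ N * VX R k)@_mm.
Proof.
move=> h; rewrite GX_coef big_ord_recr /= big1 ?add0r.
  have : \prod_(r < N) ('X - (c r)%:P) \is monic by rewrite monic_prod_XsubC.
  rewrite monicE lead_coefE -big_filter size_prod_XsubC size_filter count_predT size_ie.
  by move/eqP => ->; rewrite mul1r.
move=> i _; rewrite (dhomog_nemf_coeff (sXV_homog R k i)) ?mulr0 //.
change (mdeg mm != (i + k * k.-1)%N); by rewrite h eqn_add2r eq_sym ltn_eqF.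
Qed.
Lemma meval_GX (F : fieldType) n k N (x : 'I_n -> F) (c : 'I_N -> F) (t : 'I_k -> 'I_n) :
  ((\prod_(r < N) (sX F k - (c r)%:MP)) * VX F k).@[fun a => x (t a)]
  = (\prod_(r < N) (\sum_a x (t a) - c r)) *
    \prod_a \prod_(b | b != a) (x (t a) - x (t b)).
Proof.
rewrite mevalM !rmorph_prod; congr (_ * _); apply: eq_bigr => r _.
  rewrite rmorphB /= mevalC /sX rmorph_sum; congr (_ - _); apply: eq_bigr => a _; exact: mevalXU.
rewrite rmorph_prod; apply: eq_bigr => b _.
by rewrite rmorphB /= !mevalXU.
Qed.
Lemma term_inj (F : fieldType) n k N (x : 'I_n -> F) (hx : injective x) (c : 'I_N -> F)
  (t : 'I_k -> 'I_n) (ht : injective t) (J : {set 'I_n}) (hJ : J = t @: [set: 'I_k]) :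
  (\prod_(r < N) (\sum_a x (t a) - c r)) *
    (\prod_a \prod_(b | b != a) (x (t a) - x (t b))) / \prod_a wt x (t a)
  = (\prod_(r < N) (\sum_(i in J) x i - c r)) / (\prod_(i in J) \prod_(j in ~: J) (x i - x j)).
Proof.
have htJ : {in [set: 'I_k] &, injective t} by move=> a b _ _; exact: ht.
have sumJ : \sum_(i in J) x i = \sum_a x (t a).
  by rewrite hJ big_imset //; apply: eq_bigl => a; rewrite inE.
have tJ a : t a \in J by rewrite hJ; apply: imset_f; rewrite inE.
have wJ : \prod_a wt x (t a) = (\prod_a \prod_(b | b != a) (x (t a) - x (t b))) *
     \prod_(i in J) \prod_(j in ~: J) (x i - x j).
  have -> : \prod_(i in J) \prod_(j in ~: J) (x i - x j)
      = \prod_a \prod_(j in ~: J) (x (t a) - x j).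
    by rewrite hJ big_imset //; apply: eq_bigl => a; rewrite inE.
  rewrite -big_split /=; apply: eq_bigr => a _.
  rewrite /wt (bigID (fun j => j \in J)) /=; congr (_ * _).
    have -> : \prod_(b | b != a) (x (t a) - x (t b))
        = \prod_(b in [set: 'I_k] :\ a) (x (t a) - x (t b)).
      by apply: eq_bigl => b; rewrite !inE andbT.
    rewrite -(big_imset (h := t) (A := [set: 'I_k] :\ a) (fun j => x (t a) - x j)); last first.
      by move=> u v _ _; exact: ht.
    apply: eq_bigl => j; apply/andP/imsetP.
      case=> ja; rewrite hJ => /imsetP [b _ jb]; exists b => //.
      by rewrite !inE andbT; apply: contra ja => /eqP ba; rewrite jb ba.
    case=> b; rewrite !inE andbT => ba ->; split; last exact: tJ.
    by apply: contra ba => /eqP/ht ->.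
  apply: eq_bigl => j; rewrite inE; case jJ: (j \in J); rewrite ?andbF ?andbT //=.
  by apply/eqP => e; move: jJ; rewrite e tJ.
have VVn0 : \prod_a \prod_(b | b != a) (x (t a) - x (t b)) != 0.
  rewrite prodf_seq_neq0; apply/allP => a _; apply/implyP => _.
  rewrite prodf_seq_neq0; apply/allP => b _; apply/implyP => ba.
  by rewrite subr_eq0; apply: contra ba => /eqP/hx/ht ->.
rewrite wJ sumJ; set V := \prod_a _; set D := \prod_(i in J) _.
by rewrite invfM (mulrC V^-1) mulrA (mulrAC _ V) mulfK.
Qed.
Lemma tuple_conv (F : fieldType) n k N (x : 'I_n -> F) (hx : injective x) (c : 'I_N -> F) :
  \sum_(t : {ffun 'I_k -> 'I_n}) (\prod_(r < N) (\sum_a x (t a) - c r)) *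
    (\prod_a \prod_(b | b != a) (x (t a) - x (t b))) / \prod_a wt x (t a)
  = k`!%:R * \sum_(J : {set 'I_n} | #|J| == k)
      (\prod_(r < N) (\sum_(i in J) x i - c r)) / (\prod_(i in J) \prod_(j in ~: J) (x i - x j)).
Proof.
rewrite (bigID (fun t : {ffun _} => injectiveb t)) /= [X in _ + X]big1 ?addr0; last first.
  move=> t /injectivePn [a [b ab e]].
  have -> : \prod_a0 \prod_(b0 | b0 != a0) (x (t a0) - x (t b0)) = 0.
    by rewrite (bigD1 a) //= (bigD1 b) 1?eq_sym //= e subrr !mul0r.
  by rewrite mulr0 mul0r.
rewrite (partition_big (fun t : {ffun 'I_k -> 'I_n} => [set t a | a in [set: 'I_k]])
   (fun J : {set 'I_n} => #|J| == k)) /=; last first.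
  by move=> t /injectiveP ht; rewrite card_imset // cardsT card_ord.
rewrite mulr_sumr; apply: eq_bigr => J /eqP hJ.
rewrite (eq_bigr (fun _ => (\prod_(r < N) (\sum_(i in J) x i - c r)) /
   (\prod_(i in J) \prod_(j in ~: J) (x i - x j)))); last first.
  move=> t /andP [/injectiveP ht /eqP e].
  by apply: (@term_inj F n k N x hx c t ht J); rewrite -e.
set g := _ / _.
pose S := [set f : {ffun 'I_k -> 'I_n} in ffun_on (mem J) | injectiveb f].
rewrite (eq_bigl (fun t => t \in S)); last first.
  move=> t; rewrite !inE; apply/andP/andP => [[/injectiveP ht /eqP e]|[/ffun_onP hon /injectiveP ht]].
    split; last exact/injectiveP.
    by apply/ffun_onP => a; rewrite -e; apply: imset_f; rewrite inE.
  split; first exact/injectiveP.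
  rewrite eqEcard card_imset // cardsT card_ord hJ leqnn andbT.
  by apply/subsetP => _ /imsetP [a _ ->]; apply: hon.
rewrite sumr_const card_inj_ffuns_on card_ord.
have -> : #|mem J| = k by rewrite -hJ.
by rewrite ffactnn mulr_natl.
Qed.

Lemma LHS_const (F : fieldType) (charF : [pchar F] =i pred0)
  (n k : nat) (hk1 : (1 <= k)%N) (hkn : (k <= n)%N)
  (x : 'I_n -> F) (hx : injective x) (m : 'I_(k * (n - k)) -> F) :
  \sum_(J : {set 'I_n} | #|J| == k)
     (\prod_(r < k * (n - k)) ((\sum_(i in J) x i) - m r))
       / (\prod_(i in J) \prod_(j in ~: J) (x i - x j))
  = (sX F k ^+ (k * (n - k)) * VX F k)@_[multinom n.-1 | _ < k] / k`!%:R.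
Proof.
have kn0 : k`!%:R != 0 :> F by rewrite (pcharf0P F).1 // -lt0n fact_gt0.
have hn : (0 < n)%N by apply: leq_trans hkn.
have ar : (k * (n - k) + k * k.-1 = k * n.-1)%N.
  by rewrite -mulnDr; congr (_ * _)%N; lia.
apply: (canRL (mulfK kn0)); rewrite mulrC -tuple_conv //.
under eq_bigr do rewrite -meval_GX.
rewrite (@tupsum F n k x hx hn); last first.
  by move=> mm h; apply: GX_high; rewrite ar.
apply: GX_top; rewrite mdegE ar.
under eq_bigr do rewrite mnmE.
by rewrite sum_nat_const card_ord.
Qed.

Lemma eval_special (F : fieldType) (charF : [pchar F] =i pred0)
  (n k : nat) (hk1 : (1 <= k)%N) (hkn : (k <= n)%N) :
  \sum_(J : {set 'I_n} | #|J| == k)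
     (\prod_(r < k * (n - k)) ((\sum_(i in J) (i : nat)%:R) - ((\sum_(a < k) a)%N + r)%:R))
       / (\prod_(i in J) \prod_(j in ~: J) ((i : nat)%:R - (j : nat)%:R))
  = ((k * (n - k))`!)%:R * \prod_(i < k) ((i`!)%:R / ((n - i.+1)`!)%:R) :> F.
Proof.
have nz : forall q, (q%:R == 0 :> F) = (q == 0)%N by apply: (pcharf0P F).1.
set N := (k * (n - k))%N; set b := (\sum_(a < k) a)%N.
set T := [set i : 'I_n | (n - k <= i)%N].
have hT : #|T| = k.
  by rewrite -sum1_card (@big_top _ _ _ n k hkn (fun _ => 1%N)) sum_nat_const card_ord muln1.
have topv : (\sum_(a < k) (n - k + a) = b + N)%N.
  by rewrite big_split /= sum_nat_const card_ord addnC /N mulnC.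
rewrite (bigD1 T) ?hT //= [X in _ + X]big1 ?addr0; last first.
  move=> J /andP [/eqP hJ JT].
  have [lo hi] := @sJ_bounds n k J hJ.
  have ne : (\sum_(i in J) (i : nat))%N != (b + N)%N.
    by apply: contra JT => /eqP e; apply/eqP; apply: (@top_unique n k hkn J hJ); rewrite topv.
  have lt : (\sum_(i in J) (i : nat) - b < N)%N.
    move: lo hi ne; rewrite -/b topv => lo hi ne; set s := (\sum_(i in J) (i : nat))%N in lo hi ne *; clearbody s N b; lia.
  rewrite (bigD1 (Ordinal lt)) //= -natr_sum subnKC // subrr !mul0r //.
have -> : \sum_(i in T) (i : nat)%:R = (b + N)%:R :> F.
  by rewrite -natr_sum (@big_top _ _ _ n k hkn (fun i => i)) topv.
have -> : \prod_(r < N) ((b + N)%:R - (b + r)%:R) = N`!%:R :> F.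
  have := fact_shift N 0; rewrite fact0 muln1 addn0 => <-.
  rewrite natr_prod; apply: eq_bigr => r _.
  by rewrite -natrB ?leq_add2l ?(ltnW (ltn_ord r)) // subnDl.
have -> : \prod_(i in T) \prod_(j in ~: T) ((i : nat)%:R - (j : nat)%:R)
    = (\prod_(a < k) \prod_(j < n - k) (n - k + a - j))%:R :> F.
  rewrite (@big_top _ _ _ n k hkn (fun i => \prod_(j in ~: T) (i%:R - (j : nat)%:R))).
  rewrite natr_prod; apply: eq_bigr => a _.
  rewrite (@big_bot _ _ _ n k hkn (fun j => (n - k + a)%:R - j%:R)) natr_prod.
  apply: eq_bigr => j _; rewrite natrB //.
  by apply: leq_trans (ltnW (ltn_ord j)) (leq_addr _ _).
rewrite prodf_div -!natr_prod -(@Dn_id n k hkn) natrM.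
set D := (\prod_(a < k) _)%N; set P := (\prod_(a < k) _)%N.
have Pn0 : P%:R != 0 :> F.
  by rewrite nz -lt0n /P prodn_gt0 // => i; exact: fact_gt0.
by rewrite invfM [P%:R * _]mulrCA mulfV // mulr1.
Qed.


Theorem mainTheorem14 (F : fieldType) (charF : [pchar F] =i pred0)
  (n k : nat) (hk1 : (1 <= k)%N) (hkn : (k <= n)%N)
  (x : 'I_n -> F) (hx : injective x) (m : 'I_(k * (n - k)) -> F) :
  \sum_(J : {set 'I_n} | #|J| == k)
     (\prod_(r < k * (n - k)) ((\sum_(i in J) x i) - m r))
       / (\prod_(i in J) \prod_(j in ~: J) (x i - x j))
  = ((k * (n - k))`!)%:R
    * \prod_(i < k) ((i`!)%:R / ((n - i.+1)`!)%:R).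
Proof.
have nz : forall q, (q%:R == 0 :> F) = (q == 0)%N by apply: (pcharf0P F).1.
have key : forall a c : nat, (a%:R = c%:R :> F) -> (a <= c)%N.
  move=> a c e; case: (leqP a c) => // h.
  have := congr1 (fun z => z - c%:R) e; rewrite subrr -natrB ?(ltnW h) // => /eqP.
  by rewrite nz subn_eq0 leqNgt h.
have inj : injective (fun i : 'I_n => (i : nat)%:R : F).
  move=> i j /= e; apply/val_inj/eqP; rewrite eqn_leq.
  by rewrite (key _ _ e) (key _ _ (esym e)).
rewrite (@LHS_const F charF n k hk1 hkn x hx m).
rewrite -(@LHS_const F charF n k hk1 hkn (fun i => (i : nat)%:R) inj
   (fun r => ((\sum_(a < k) a)%N + r)%:R)).
exact: eval_special.
Qed.
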